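(* For every $p\in[0,1]$ and $k\ge1$, there is a deterministic algorithm for Locate on the uniform input distribution that runs in $k$ rounds, asks at most $k\lceil pn\rceil^{1/k}$ queries, and succeeds with probability at least $p$.
   Context: Locate problem in the rank query model: there is a vector $\vec{x}=(x_1,\ldots,x_n)$ whose ranks form a permutation of $\{1,\ldots,n\}$; an index $i$ is given and the goal is to output $\mathrm{rank}(x_i)$. Queries have the form ''How is $\mathrm{rank}(x_j)$ compared to $m$?'', with answer ''$<$'', ''$=$'' or ''$>$''. An algorithm runs in $k$ rounds if in each of $k$ rounds it submits a set of queries chosen depending only on answers of earlier rounds, then receives all answers. On the uniform input distribution the rank permutation is uniformly random, and the success probability is over this randomness. *)

(* Defs.v *)
From HB Require Import structures.
From mathcomp Require Import all_boot all_order all_algebra all_fingroup.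
From mathcomp Require Import all_classical all_reals all_analysis.
Set Implicit Arguments. Unset Strict Implicit. Unset Printing Implicit Defensive.
Import Order.TTheory GRing.Theory Num.Theory.

(* Answers to a rank query "How is rank(x_j) compared to m?" *)
Inductive ans := ALt | AEq | AGt.

Definition cmp_ans (a b : nat) : ans :=
  if (a < b)%N then ALt else if a == b then AEq else AGt.

(* The input is represented by its rank permutation s : 'S_n, with the
   convention rank(x_j) = (s j).+1 in {1,..,n}. *)
Definition rank_of n (s : 'S_n) (j : 'I_n) : nat := (s j).+1.

Definition query n := ('I_n * nat)%type.
Definition round_rec n := seq (query n * ans).
Definition history n := seq (round_rec n).

(* A deterministic adaptive algorithm: the set of queries of the next round
   is a function of the answers of all earlier rounds (the history), and the
   output is a function of the full history. *)
Record algo n := Algo {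
  next_queries : history n -> seq (query n);
  output : history n -> nat }.

Definition answer n (s : 'S_n) (q : query n) : query n * ans :=
  (q, cmp_ans (rank_of s q.1) q.2).

Fixpoint run n (A : algo n) (s : 'S_n) (r : nat) : history n :=
  match r with
  | 0 => [::]
  | r'.+1 => let h := run A s r' in
             rcons h (map (answer s) (next_queries A h))
  end.

Definition num_queries n (A : algo n) (s : 'S_n) (k : nat) : nat :=
  sumn (map size (run A s k)).

Definition succeeds n (A : algo n) (k : nat) (i : 'I_n) (s : 'S_n) : bool :=
  output A (run A s k) == rank_of s i.

Definition success_prob (R : realType) n (A : algo n) (k : nat) (i : 'I_n) : R :=
  (#|[set s : 'S_n | succeeds A k i s]|%:R / (#|[set: 'S_n]|)%:R)%R.

(* Main.v *)
Require Import Defs.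
From HB Require Import structures.
From mathcomp Require Import all_boot all_order all_algebra all_fingroup.
From mathcomp Require Import all_classical all_reals all_analysis.
From mathcomp Require Import zify.
Import Order.TTheory GRing.Theory Num.Theory.
Set Implicit Arguments. Unset Strict Implicit. Unset Printing Implicit Defensive.

Definition lbr n (r : round_rec n) : nat := \big[maxn/0%N]_(e <- r | if e.2 is ALt then false else true) e.1.2.-1.
Definition lbh n (h : history n) : nat := \big[maxn/0%N]_(r <- h) lbr r.
Definition alg n (i : 'I_n) (k d : nat) : algo n :=
  Algo (fun h => [seq (i, (lbh h + t * (d.+1)^(k - (size h).+1)).+1) | t <- iota 1 d])
       (fun h => (lbh h).+1).

Lemma size_run n (A : algo n) s j : size (run A s j) = j.
Proof. by elim: j => //= j IH; rewrite size_rcons IH. Qed.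

Lemma nq_alg n (i : 'I_n) k d s j : sumn (map size (run (alg i k d) s j)) = j * d.
Proof.
elim: j => //= j IH; rewrite map_rcons sumn_rcons IH !size_map size_iota; lia.
Qed.

Lemma lbh_rcons n (h : history n) r : lbh (rcons h r) = maxn (lbh h) (lbr r).
Proof. by rewrite /lbh -cats1 big_cat big_seq1. Qed.

Lemma lbr_round n (s : 'S_n) (i : 'I_n) L P d :
  lbr (map (answer s) [seq (i, (L + t * P).+1) | t <- iota 1 d])
  = \big[maxn/0%N]_(t <- iota 1 d | L + t * P <= s i) (L + t * P).
Proof.
rewrite /lbr big_map big_map; apply: eq_big => t //=.
rewrite /cmp_ans /rank_of /= ltnS.
case: ltnP => h; first by [].
by case: eqP.
Qed.

Lemma step (L v P d : nat) : 0 < P -> L <= v -> v < L + d.+1 * P ->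
  maxn L (\big[maxn/0%N]_(t <- iota 1 d | L + t*P <= v) (L + t*P)) <= v /\
  v < maxn L (\big[maxn/0%N]_(t <- iota 1 d | L + t*P <= v) (L + t*P)) + P.
Proof.
move=> P0 Lv vlt; split.
  rewrite geq_max Lv /=; apply/bigmax_leqP_seq => t _ //.
set X := maxn _ _.
have LX : L <= X by exact: leq_maxl.
set t0 := (v - L) %/ P.
have h1 : t0 * P <= v - L by exact: leq_trunc_div.
have h2 : v - L < t0.+1 * P by exact: ltn_ceil.
have h3 : t0 < d.+1 by rewrite ltn_divLR //; lia.
case: (posnP t0) => [t00|t0p].
  rewrite t00 in h2; lia.
have : L + t0 * P <= X.
  apply: leq_trans (leq_maxr _ _).
  apply: (leq_bigmax_seq t0) => //; last by lia.
  rewrite mem_iota; lia.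
lia.
Qed.

Lemma inv n (i : 'I_n) k d (s : 'S_n) j : j <= k -> s i < (d.+1)^k ->
  lbh (run (alg i k d) s j) <= s i < lbh (run (alg i k d) s j) + (d.+1)^(k - j).
Proof.
move=> + sik; elim: j => [_|j IH jk].
  by rewrite /lbh big_nil subn0 sik.
have /andP[h1 h2] := IH (ltnW jk).
rewrite /= lbh_rcons /= size_run lbr_round.
have e : (d.+1)^(k-j) = d.+1 * (d.+1)^(k - j.+1).
  by rewrite -expnS; congr (_ ^ _); lia.
rewrite e in h2.
have [] := step (L := lbh (run (alg i k d) s j)) (v := s i) (d := d) (P := (d.+1)^(k - j.+1)) ltac:(by rewrite expn_gt0) h1 h2.
by move=> -> ->.
Qed.

Lemma alg_succ n (i : 'I_n) k d (s : 'S_n) : s i < (d.+1)^k ->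
  succeeds (alg i k d) k i s.
Proof.
move=> h; have := inv (leqnn k) h; rewrite subnn expn0 addn1 ltnS => hh.
rewrite /succeeds /rank_of /=; apply/eqP; congr _.+1; apply/eqP; rewrite eqn_leq; lia.
Qed.
Lemma fib_le n (i a b : 'I_n) :
  #|[set s : 'S_n | s i == a]| <= #|[set s : 'S_n | s i == b]|.
Proof.
rewrite -(card_imset _ (@mulIg _ (tperm a b))).
apply: subset_leq_card; apply/fintype.subsetP => x /imsetP [s]; rewrite !inE => /eqP sa ->.
by rewrite permM sa tpermL.
Qed.

Lemma fib_eq n (i a b : 'I_n) :
  #|[set s : 'S_n | s i == a]| = #|[set s : 'S_n | s i == b]|.
Proof. by apply/eqP; rewrite eqn_leq !fib_le. Qed.

Lemma card_lt n (i : 'I_n) (c : nat) :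
  #|[set s : 'S_n | s i < c]| = #|[pred a : 'I_n | a < c]| * #|[set s : 'S_n | s i == i]|.
Proof.
rewrite -sum1_card.
rewrite (eq_bigl (fun s : 'S_n => s i < c)); last by move=> s; rewrite inE.
rewrite (partition_big (fun s : 'S_n => s i) (fun a : 'I_n => a < c)) //=.
rewrite -sum_nat_const; apply: eq_bigr => a ac.
rewrite -(fib_eq i a) -sum1_card; apply: eq_bigl => s; rewrite inE.
by case: eqP => [->|]; rewrite ?ac ?andbF.
Qed.

Lemma card_ord_lt n c : #|[pred a : 'I_n | a < c]| = minn c n.
Proof.
case: (leqP n c) => h.
  rewrite -[RHS]card_ord; apply: eq_card => a /=.
  by rewrite inE (leq_trans (ltn_ord a) h).

rewrite -sum1_card.
rewrite -[in RHS](card_ord c) -sum1_card.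
rewrite (big_ord_widen n (fun _ => 1) (ltnW h)).
by apply: eq_bigl.
Qed.
Unset Implicit Arguments.
Local Open Scope ring_scope.
Lemma root_ex (k N : nat) : (1 <= k)%N -> exists d, (d ^ k <= N < d.+1 ^ k)%N.
Proof.
move=> k1; elim: N => [|N [d /andP[h1 h2]]].
  by exists 0%N; rewrite exp0n // exp1n.
case: (leqP (d.+1 ^ k) N.+1) => h.
  exists d.+1; rewrite h /=.
  have : (d.+1 ^ k < d.+2 ^ k)%N by rewrite ltn_exp2r; lia.
  lia.
by exists d; rewrite h; lia.
Qed.

Theorem proposition5 (R : realType) (n : nat) (i : 'I_n) (p : R) (k : nat) :
  0 <= p <= 1 -> (1 <= k)%N ->
  exists A : algo n,
    (forall s : 'S_n,
       (num_queries A s k)%:R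
         <= k%:R * powR ((Num.ceil (p * n%:R))%:~R : R) (k%:R)^-1) /\
    p <= success_prob R A k i.
Proof.
move=> /andP[p0 p1] k1.
have n0 : (0 < n)%N by case: n i => // [[]].
set c := Num.ceil (p * n%:R).
have c0 : 0 <= c by rewrite /c ceil_ge0 (lt_le_trans _ (mulr_ge0 p0 (ler0n _ _))).
set cn := `|c|%N.
have ccn : (c%:~R : R) = cn%:R by rewrite /cn -[in LHS](gez0_abs c0).
have [d /andP[hd1 hd2]] := @root_ex k cn k1.
exists (alg i k d); split.
  move=> s; rewrite /num_queries nq_alg natrM ler_wpM2l // ccn.
  have k0 : (k%:R : R) != 0 by rewrite pnatr_eq0; lia.
  have -> : (d%:R : R) = powR (d%:R ^+ k) k%:R^-1.
    by rewrite -powR_mulrn // -powRrM mulfV // powRr1.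
  apply: ge0_ler_powR; rewrite ?invr_ge0 ?ler0n ?nnegrE ?exprn_ge0 ?ler0n //.
  by rewrite -natrX ler_nat.
rewrite /success_prob cardsT card_Sn.
set f0 := #|[set s : 'S_n | s i == i]|.
have nf : n`! = (n * f0)%N.
  rewrite -card_Sn -cardsT -[n in (n * _)%N]minnn -card_ord_lt -card_lt.
  by apply: eq_card => s; rewrite !inE ltn_ord.
have sc : (minn cn n * f0 <= #|[set s | succeeds (alg i k d) k i s]|)%N.
  rewrite -card_ord_lt -card_lt; apply: subset_leq_card; apply/fintype.subsetP => s.
  rewrite !inE => h; apply: alg_succ; lia.
have f00 : (0 < f0)%N by move: (fact_gt0 n); rewrite nf muln_gt0 => /andP[].
rewrite ler_pdivlMr; last by rewrite ltr0n fact_gt0.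
rewrite nf natrM mulrA; apply: le_trans (_ : (minn cn n * f0)%:R <= _); last by rewrite ler_nat.
rewrite natrM ler_wpM2r ?ler0n //.
case: (leqP cn n) => h.
  by rewrite -ccn ceil_ge.
by rewrite -[X in _ <= X]mul1r ler_wpM2r ?ler0n.
Qed.
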